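(* If $\bar f_1,\dots,\bar f_k\in\mathbb{K}[S_M]$ is a regular sequence in $\mathbb{K}[S_M]$, then for each $i\le k$, the homogenization $\chi^{-1}(\bar f_i)$ is not a zero-divisor in $\mathbb{K}[S_M^h]/\chi^{-1}(\langle\bar f_1,\dots,\bar f_{i-1}\rangle)$, where $\chi^{-1}(J)$ denotes the ideal of $\mathbb{K}[S_M^h]$ generated by the homogenizations of all elements of the ideal $J$.
   Context: Let $\mathbb{K}$ be a field of characteristic $0$, $M\subset\mathbb{R}^n$ a polytope with $0\in M$, $S_M\subset\mathbb{Z}^n$ the affine semigroup generated by $M\cap\mathbb{Z}^n$ and $S_M^h\subset\mathbb{Z}^{n+1}$ the one generated by $\{(s,1):s\in M\cap\mathbb{Z}^n\}$, both assumed pointed. $\mathbb{K}[S]$ is the semigroup algebra with monomials $X^s$, $X^sX^t=X^{s+t}$. The affine degree $\delta^A(X^s)$ of a monomial of $\mathbb{K}[S_M]$ is the least $d\in\mathbb{N}$ with $(s,d)\in S_M^h$, and for $f=\sum c_sX^s\ne0$, $\delta^A(f)=\max\{\delta^A(X^s):c_s\ne0\}$. The homogenization of $f$ is $\chi^{-1}(f)=\sum c_sX^{(s,\delta^A(f))}\in\mathbb{K}[S_M^h]$. *)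

(* Defs.v *)
From HB Require Import structures.
From mathcomp Require Import all_boot all_order all_algebra.
From mathcomp Require Import reals.
From Stdlib Require Import ClassicalEpsilon.
Set Implicit Arguments. Unset Strict Implicit. Unset Printing Implicit Defensive.
Import Order.TTheory GRing.Theory Num.Theory.
Local Open Scope ring_scope.

Definition in_conv (R : realType) (n p : nat) (V : 'I_p -> 'rV[R]_n)
  (x : 'rV[R]_n) : Prop :=
  exists l : 'I_p -> R, (forall i, 0 <= l i) /\ \sum_i l i = 1 /\
    x = \sum_i l i *: V i.

Definition latpt (R : realType) (n p : nat) (V : 'I_p -> 'rV[R]_n)
  (u : 'rV[int]_n) : Prop := in_conv V (map_mx (fun z : int => z%:~R) u).

Definition in_sgrp (m : nat) (G : 'rV[int]_m -> Prop) (w : 'rV[int]_m) : Prop :=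
  exists s : seq 'rV[int]_m, (forall x, x \in s -> G x) /\ w = \sum_(x <- s) x.

Definition hpt (n : nat) (u : 'rV[int]_n) (d : nat) : 'rV[int]_(n + 1) :=
  row_mx u (\row_(j < 1) (d%:Z)).

Definition S_M (R : realType) (n p : nat) (V : 'I_p -> 'rV[R]_n) :=
  in_sgrp (latpt V).
Definition S_Mh (R : realType) (n p : nat) (V : 'I_p -> 'rV[R]_n) :=
  in_sgrp (fun w : 'rV[int]_(n + 1) => exists u, latpt V u /\ w = hpt u 1).

Definition pointed (m : nat) (S : 'rV[int]_m -> Prop) : Prop :=
  forall u, S u -> S (- u) -> u = 0.

(* ---------- semigroup algebras ----------
   An element of the group algebra K[Z^m] is represented by a finite formal
   sum  sum_j c_j X^(s_j), i.e. a list of (coefficient, exponent) pairs;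
   its coefficient of X^u is [coef f u].  Two representations denote the same
   element iff their coefficient functions agree.  K[S] is the set of those
   elements whose support lies in S. *)
Definition galg (K : fieldType) (m : nat) := seq (K * 'rV[int]_m).

Definition coef (K : fieldType) (m : nat) (f : galg K m) (u : 'rV[int]_m) : K :=
  \sum_(q <- f | q.2 == u) q.1.

Definition gmul (K : fieldType) (m : nat) (f g : galg K m) : galg K m :=
  [seq (a.1 * b.1, a.2 + b.2) | a <- f, b <- g].

Definition in_alg (K : fieldType) (m : nat) (S : 'rV[int]_m -> Prop)
  (f : galg K m) : Prop := forall u, coef f u != 0 -> S u.

Definition in_ideal (K : fieldType) (m : nat) (S : 'rV[int]_m -> Prop)
  (G : galg K m -> Prop) (h : galg K m) : Prop :=
  exists rs : seq (galg K m * galg K m),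
    (forall q, q \in rs -> in_alg S q.1 /\ G q.2) /\
    coef h =1 coef (flatten [seq gmul q.1 q.2 | q <- rs]).

Definition nzd_mod (K : fieldType) (m : nat) (S : 'rV[int]_m -> Prop)
  (G : galg K m -> Prop) (f : galg K m) : Prop :=
  forall g, in_alg S g -> in_ideal S G (gmul f g) -> in_ideal S G g.

Definition gone (K : fieldType) (m : nat) : galg K m := [:: (1, 0)].

Definition regular_seq (K : fieldType) (m : nat) (S : 'rV[int]_m -> Prop)
  (fs : seq (galg K m)) : Prop :=
  (forall f, f \in fs -> in_alg S f) /\
  (forall i, (i < size fs)%N ->
     nzd_mod S (fun g => g \in take i fs) (nth [::] fs i)) /\
  ~ in_ideal S (fun g => g \in fs) (gone K m).

Definition affdeg (R : realType) (n p : nat) (V : 'I_p -> 'rV[R]_n)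
  (s : 'rV[int]_n) : nat :=
  epsilon (inhabits 0%N)
    (fun d => S_Mh V (hpt s d) /\ forall d', S_Mh V (hpt s d') -> (d <= d')%N).

Definition supp_list (K : fieldType) (m : nat) (f : galg K m) : seq 'rV[int]_m :=
  [seq u <- undup [seq q.2 | q <- f] | coef f u != 0].

Definition affdeg_poly (R : realType) (K : fieldType) (n p : nat)
  (V : 'I_p -> 'rV[R]_n) (f : galg K n) : nat :=
  \max_(u <- supp_list f) affdeg V u.

Definition homog (R : realType) (K : fieldType) (n p : nat)
  (V : 'I_p -> 'rV[R]_n) (f : galg K n) : galg K (n + 1) :=
  [seq (coef f u, hpt u (affdeg_poly V f)) | u <- supp_list f].

Definition homog_ideal_gens (R : realType) (K : fieldType) (n p : nat)
  (V : 'I_p -> 'rV[R]_n) (G : galg K n -> Prop) : galg K (n + 1) -> Prop :=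
  fun h => exists g, in_ideal (S_M V) G g /\ h = homog V g.

(* Main.v *)
Require Import Defs.
From mathcomp Require Import all_boot all_order all_algebra.
From mathcomp Require Import reals.
From Stdlib Require Import ClassicalEpsilon Classical_Prop.
Set Warnings "-notation-overridden,-ambiguous-paths".
Set Implicit Arguments. Unset Strict Implicit. Unset Printing Implicit Defensive.
Import Order.TTheory GRing.Theory Num.Theory.
Local Open Scope ring_scope.

Definition tc (n : nat) (v : 'rV[int]_(n + 1)) : int := v 0 (rshift n 0).
Definition hptz (n : nat) (u : 'rV[int]_n) (c : int) : 'rV[int]_(n + 1) :=
  row_mx u (\row_(j < 1) c).

Lemma hpt_hptz n (u : 'rV[int]_n) (d : nat) : hpt u d = hptz u d%:Z.
Proof. by []. Qed.

Lemma tc_hptz n (u : 'rV[int]_n) c : tc (hptz u c) = c.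
Proof. by rewrite /tc /hptz row_mxEr mxE. Qed.

Lemma lsub_hptz n (u : 'rV[int]_n) c : lsubmx (hptz u c) = u.
Proof. by rewrite /hptz row_mxKl. Qed.

Lemma hptz_split n (v : 'rV[int]_(n + 1)) : v = hptz (lsubmx v) (tc v).
Proof.
rewrite -{1}(hsubmxK v) /hptz; congr row_mx.
by apply/matrixP => i j; rewrite !ord1 !mxE /tc.
Qed.

Lemma hptz_eq n (u w : 'rV[int]_n) c d :
  (hptz u c == hptz w d) = (u == w) && (c == d).
Proof.
apply/eqP/andP => [E|[/eqP -> /eqP ->]] //.
split; apply/eqP.
- by rewrite -(lsub_hptz u c) E lsub_hptz.
- by rewrite -(tc_hptz u c) E tc_hptz.
Qed.

Lemma hptzD n (u w : 'rV[int]_n) a b :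
  hptz u a + hptz w b = hptz (u + w) (a + b).
Proof.
rewrite /hptz add_row_mx; congr row_mx.
by apply/matrixP => i j; rewrite !mxE.
Qed.

Lemma hptzN n (u : 'rV[int]_n) a : - hptz u a = hptz (- u) (- a).
Proof.
rewrite /hptz opp_row_mx; congr row_mx.
by apply/matrixP => i j; rewrite !mxE.
Qed.

Lemma hptzB n (u w : 'rV[int]_n) a b :
  hptz u a - hptz w b = hptz (u - w) (a - b).
Proof. by rewrite hptzN hptzD. Qed.

Lemma tcD n (x y : 'rV[int]_(n + 1)) : tc (x + y) = tc x + tc y.
Proof. by rewrite /tc mxE. Qed.

Lemma coef_nil (K : fieldType) m (u : 'rV[int]_m) : coef ([::] : galg K m) u = 0.
Proof. by rewrite /coef big_nil. Qed.

Lemma coef_cons (K : fieldType) m (q : K * 'rV[int]_m) f u :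
  coef (q :: f) u = (if q.2 == u then q.1 else 0) + coef f u.
Proof. by rewrite /coef big_cons; case: ifP; rewrite ?add0r. Qed.

Lemma coef_cat (K : fieldType) m (f g : galg K m) u :
  coef (f ++ g) u = coef f u + coef g u.
Proof. by rewrite /coef big_cat. Qed.

Lemma coef_flatten (K : fieldType) m (L : seq (galg K m)) u :
  coef (flatten L) u = \sum_(l <- L) coef l u.
Proof.
elim: L => [|l L IH] /=; first by rewrite big_nil coef_nil.
by rewrite coef_cat IH big_cons.
Qed.

Lemma mem_supp (K : fieldType) m (f : galg K m) x :
  (x \in supp_list f) = (coef f x != 0).
Proof.
rewrite mem_filter mem_undup; case: (coef f x =P 0) => //= Hc.
have [//|Hn] := boolP (x \in _); case: Hc.
rewrite /coef big1_seq // => q /andP[/eqP E qf].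
by case/negP: Hn; rewrite -E map_f.
Qed.

Lemma sum_coef_gen (K : fieldType) m (f : galg K m) (phi : 'rV[int]_m -> K)
  (s : seq 'rV[int]_m) :
  uniq s -> {subset [seq q.2 | q <- f] <= s} ->
  \sum_(q <- f) q.1 * phi q.2 = \sum_(w <- s) coef f w * phi w.
Proof.
move=> us; elim: f => [|q f IH] sub.
  by rewrite big_nil big1 // => w _; rewrite coef_nil mul0r.
rewrite big_cons IH; last by move=> x xf; apply: sub; rewrite /= in_cons xf orbT.
under [in RHS]eq_bigr => w _ do rewrite coef_cons mulrDl.
rewrite big_split /=; congr (_ + _).
transitivity (\sum_(w <- s | w == q.2) q.1 * phi w).
  rewrite -big_filter filter_pred1_uniq ?big_seq1 //.
  by apply: sub; rewrite /= in_cons eqxx.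
rewrite big_mkcond; apply: eq_bigr => w _.
case: (w =P q.2) => [->|ne]; first by rewrite eqxx.
by case: eqP => [E|]; [case: ne | rewrite mul0r].
Qed.

Lemma sum_coef (K : fieldType) m (f : galg K m) (phi : 'rV[int]_m -> K) :
  \sum_(q <- f) q.1 * phi q.2 = \sum_(w <- supp_list f) coef f w * phi w.
Proof.
rewrite (@sum_coef_gen _ _ f phi (undup [seq q.2 | q <- f])) ?undup_uniq //;
  last by move=> x; rewrite mem_undup.
rewrite /supp_list big_filter [RHS]big_mkcond; apply: eq_bigr => w _ /=.
by case: eqP => [->|]; rewrite ?mul0r.
Qed.

Lemma coef_gmul_l (K : fieldType) m (f g : galg K m) u :
  coef (gmul f g) u = \sum_(x <- f) x.1 * coef g (u - x.2).
Proof.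
rewrite /coef /gmul big_mkcond big_allpairs_dep /=.
apply: eq_bigr => x _; rewrite mulr_sumr [RHS]big_mkcond /=; apply: eq_bigr => y _.
have -> : (x.2 + y.2 == u) = (y.2 == u - x.2).
  by rewrite [RHS]eq_sym subr_eq eq_sym addrC.
by case: ifP; rewrite ?mulr0.
Qed.

Lemma coef_gmul_r (K : fieldType) m (f g : galg K m) u :
  coef (gmul f g) u = \sum_(y <- g) y.1 * coef f (u - y.2).
Proof.
rewrite /coef /gmul big_mkcond big_allpairs_dep /= exchange_big /=.
apply: eq_bigr => y _; rewrite mulr_sumr [RHS]big_mkcond /=; apply: eq_bigr => x _.
have -> : (x.2 + y.2 == u) = (x.2 == u - y.2).
  by rewrite [RHS]eq_sym subr_eq eq_sym.
by case: ifP; rewrite ?mulr0 // mulrC.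
Qed.

Lemma gmulC (K : fieldType) m (f g : galg K m) u :
  coef (gmul f g) u = coef (gmul g f) u.
Proof. by rewrite coef_gmul_r coef_gmul_l. Qed.

Lemma coef_gmul_eqr (K : fieldType) m (f g g' : galg K m) :
  coef g =1 coef g' -> coef (gmul f g) =1 coef (gmul f g').
Proof. by move=> E u; rewrite !coef_gmul_l; apply: eq_bigr => x _; rewrite E. Qed.

Lemma gmulA (K : fieldType) m (f g h : galg K m) u :
  coef (gmul f (gmul g h)) u = coef (gmul (gmul f g) h) u.
Proof.
rewrite coef_gmul_l coef_gmul_r.
under eq_bigr => x _ do rewrite coef_gmul_r mulr_sumr.
under [in RHS]eq_bigr => z _ do rewrite coef_gmul_l mulr_sumr.
rewrite exchange_big; apply: eq_bigr => z _; apply: eq_bigr => x _.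
by rewrite mulrCA addrAC.
Qed.

Lemma coef_gmul_flatten (K : fieldType) m (f : galg K m) L u :
  coef (gmul f (flatten L)) u = \sum_(l <- L) coef (gmul f l) u.
Proof.
rewrite coef_gmul_l.
under eq_bigr => x _ do rewrite coef_flatten mulr_sumr.
rewrite exchange_big; apply: eq_bigr => l _; by rewrite coef_gmul_l.
Qed.

Lemma sum_neq0 (K : fieldType) (I : eqType) (r : seq I) (F : I -> K) :
  \sum_(i <- r) F i != 0 -> exists2 i, i \in r & F i != 0.
Proof.
move=> nz; have: ~~ all (fun i => F i == 0) r.
  apply: contra nz => /allP H; rewrite big1_seq //.
  by move=> i /andP[_ /H /eqP].
by case/allPn => i ir Fi; exists i.
Qed.

Lemma in_sgrp_add m (G : 'rV[int]_m -> Prop) a b :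
  in_sgrp G a -> in_sgrp G b -> in_sgrp G (a + b).
Proof.
move=> [s [Hs ->]] [t [Ht ->]]; exists (s ++ t); split; last by rewrite big_cat.
by move=> x; rewrite mem_cat => /orP[/Hs|/Ht].
Qed.

Lemma in_alg_mul (K : fieldType) m (S : 'rV[int]_m -> Prop) (f g : galg K m) :
  (forall a b, S a -> S b -> S (a + b)) ->
  Defs.in_alg S f -> Defs.in_alg S g -> Defs.in_alg S (gmul f g).
Proof.
move=> Sadd Hf Hg u; rewrite coef_gmul_l (sum_coef f (fun w => coef g (u - w))).
case/sum_neq0 => w _; rewrite mulf_eq0 negb_or => /andP[/Hf Sw /Hg Suw].
by have := Sadd _ _ Sw Suw; rewrite addrC subrK.
Qed.

Lemma ideal_eq (K : fieldType) m (S : 'rV[int]_m -> Prop) G (h h' : galg K m) :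
  coef h =1 coef h' -> in_ideal S G h' -> in_ideal S G h.
Proof. by move=> E [rs [H1 H2]]; exists rs; split => // u; rewrite E H2. Qed.

Lemma ideal_nil (K : fieldType) m (S : 'rV[int]_m -> Prop) G :
  in_ideal S G ([::] : galg K m).
Proof. by exists [::]. Qed.

Lemma ideal_cat (K : fieldType) m (S : 'rV[int]_m -> Prop) G (h1 h2 : galg K m) :
  in_ideal S G h1 -> in_ideal S G h2 -> in_ideal S G (h1 ++ h2).
Proof.
move=> [r1 [H1 E1]] [r2 [H2 E2]]; exists (r1 ++ r2); split.
  by move=> q; rewrite mem_cat => /orP[/H1|/H2].
by move=> u; rewrite map_cat flatten_cat !coef_cat E1 E2.
Qed.

Lemma ideal_flatten (K : fieldType) m (S : 'rV[int]_m -> Prop) G (T : eqType)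
  (L : seq T) (F : T -> galg K m) :
  (forall x, x \in L -> in_ideal S G (F x)) -> in_ideal S G (flatten (map F L)).
Proof.
elim: L => [|x L IH] H /=; first exact: ideal_nil.
apply: ideal_cat; first by apply: H; rewrite in_cons eqxx.
by apply: IH => y yL; apply: H; rewrite in_cons yL orbT.
Qed.

Lemma ideal_mul (K : fieldType) m (S : 'rV[int]_m -> Prop) G (a b : galg K m) :
  (forall x y, S x -> S y -> S (x + y)) ->
  Defs.in_alg S a -> in_ideal S G b -> in_ideal S G (gmul a b).
Proof.
move=> Sadd Ha [rs [Hrs Hb]].
exists [seq (gmul a q.1, q.2) | q <- rs]; split.
  move=> q /mapP[q' q'rs ->] /=; have [H1 H2] := Hrs q' q'rs.
  by split => //; apply: in_alg_mul.
move=> u; rewrite (coef_gmul_eqr a Hb) coef_gmul_flatten coef_flatten -map_comp.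
rewrite big_map !big_map; apply: eq_bigr => q _; exact: gmulA.
Qed.

Definition Dh (K : fieldType) n (h : galg K (n + 1)) : galg K n :=
  [seq (q.1, lsubmx q.2) | q <- h].
Definition comp (K : fieldType) n (c : int) (h : galg K (n + 1)) : galg K (n + 1) :=
  [seq q <- h | tc q.2 == c].

Lemma coef_comp (K : fieldType) n c (h : galg K (n + 1)) u :
  coef (comp c h) u = if tc u == c then coef h u else 0.
Proof.
rewrite /coef /comp big_filter_cond; case: ifP => Hu.
  by apply: eq_bigl => q; case: (q.2 =P u) => [->|]; rewrite ?Hu ?andbF.
by rewrite big_pred0 // => q; case: (q.2 =P u) => [->|]; rewrite ?Hu ?andbF.
Qed.

Lemma coef_Dh_hom (K : fieldType) n c (h : galg K (n + 1)) w :
  all (fun q => tc q.2 == c) h -> coef (Dh h) w = coef h (hptz w c).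
Proof.
move=> /allP Hh; rewrite /coef /Dh big_map /=.
rewrite big_seq_cond [RHS]big_seq_cond; apply: eq_bigl => q.
case qh: (q \in h) => //=.
by rewrite {2}(hptz_split q.2) hptz_eq (eqP (Hh q qh)) eqxx andbT.
Qed.

Lemma coef_Dcomp (K : fieldType) n c (h : galg K (n + 1)) w :
  coef (Dh (comp c h)) w = coef h (hptz w c).
Proof.
rewrite (@coef_Dh_hom _ _ c); last by apply/allP => q; rewrite mem_filter => /andP[].
by rewrite coef_comp tc_hptz eqxx.
Qed.

Lemma Dh_comp_cat (K : fieldType) n c (h1 h2 : galg K (n + 1)) :
  Dh (comp c (h1 ++ h2)) = Dh (comp c h1) ++ Dh (comp c h2).
Proof. by rewrite /Dh /comp filter_cat map_cat. Qed.

Lemma homog_lem (R : realType) (K : fieldType) n p (V : 'I_p -> 'rV[R]_n)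
  (a : galg K (n + 1)) (g' : galg K n) w e :
  coef (gmul a (homog V g')) (hptz w e) =
  coef (gmul (Dh (comp (e - (affdeg_poly V g')%:Z) a)) g') w.
Proof.
rewrite coef_gmul_r /homog big_map /= coef_gmul_r.
under [in RHS]eq_bigr => y _ do rewrite coef_Dcomp.
rewrite (sum_coef g' (fun x => coef a (hptz (w - x) (e - (affdeg_poly V g')%:Z)))).
by apply: eq_bigr => x _; rewrite hpt_hptz hptzB.
Qed.

Lemma coef_homog (R : realType) (K : fieldType) n p (V : 'I_p -> 'rV[R]_n)
  (h : galg K n) v :
  coef (homog V h) v =
  if tc v == (affdeg_poly V h)%:Z then coef h (lsubmx v) else 0.
Proof.
rewrite /coef /homog big_map /=.
under eq_bigl => x do rewrite hpt_hptz {1}(hptz_split v) hptz_eq.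
case: ifP => Ht; last first.
  by rewrite big_pred0 // => x; rewrite [_ == tc v]eq_sym Ht andbF.
rewrite eq_sym in Ht; under eq_bigl => x do rewrite Ht andbT.
have [Hin|Hn] := boolP (lsubmx v \in supp_list h).
  rewrite -big_filter filter_pred1_uniq ?big_seq1 //.
  by rewrite filter_uniq ?undup_uniq.
rewrite big1_seq; last by move=> x /andP[/eqP -> H]; rewrite H in Hn.
by move: Hn; rewrite mem_supp negbK /coef => /eqP ->.
Qed.

Lemma SMh_lsub (R : realType) n p (V : 'I_p -> 'rV[R]_n) w :
  S_Mh V w -> S_M V (lsubmx w).
Proof.
move=> [s [Hs ->]]; exists [seq lsubmx x | x <- s]; split.
  by move=> x /mapP[y ys ->]; have [u [Hu ->]] := Hs y ys; rewrite hpt_hptz lsub_hptz.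
by rewrite raddf_sum big_map.
Qed.

Lemma SMh_tc (R : realType) n p (V : 'I_p -> 'rV[R]_n) w :
  S_Mh V w -> 0 <= tc w.
Proof.
move=> [s [Hs ->]]; elim: s Hs => [|x s IH] Hs.
  by rewrite big_nil /tc mxE.
rewrite big_cons tcD addr_ge0 //; last first.
  by apply: IH => y ys; apply: Hs; rewrite in_cons ys orbT.
by have [u [_ ->]] := Hs x (mem_head _ _); rewrite hpt_hptz tc_hptz.
Qed.

Lemma SMh_hpt0 (R : realType) n p (V : 'I_p -> 'rV[R]_n) j :
  in_conv V 0 -> S_Mh V (hpt 0 j).
Proof.
move=> H0; exists (nseq j (hpt 0 1)); split.
  move=> x /nseqP[-> _]; exists 0; split => //.
  rewrite /latpt; suff -> : map_mx (fun z : int => z%:~R) (0 : 'rV[int]_n) = (0 : 'rV[R]_n) by [].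
  by apply/matrixP => a b; rewrite !mxE.
rewrite big_nseq; elim: j => [|j IH] /=.
  rewrite hpt_hptz /hptz -row_mx0; congr row_mx; by apply/matrixP => a b; rewrite !mxE.
rewrite -IH !hpt_hptz hptzD addr0; congr hptz; by rewrite -PoszD add1n.
Qed.

Lemma min_ex (P : nat -> Prop) k :
  P k -> exists d, P d /\ forall d', P d' -> (d <= d')%N.
Proof.
elim: k {-2}k (leqnn k) => [|k IH] j Hj Pj.
  by exists j; split => // d' _; move: Hj; rewrite leqn0 => /eqP ->.
case: (classic (exists j', (j' <= k)%N /\ P j')) => [[j' [Hj' Pj']]|Hn].
  exact: (IH j').
exists j; split => // d' Pd'; case: (leqP j d') => // Hlt.
by case: Hn; exists d'; split => //; rewrite -ltnS (leq_trans Hlt Hj).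
Qed.

Lemma affdeg_le (R : realType) n p (V : 'I_p -> 'rV[R]_n) u k :
  S_Mh V (hpt u k) -> (affdeg V u <= k)%N.
Proof.
move=> Hk; rewrite /affdeg.
have [] := epsilon_spec (inhabits 0%N)
  (fun d => S_Mh V (hpt u d) /\ forall d', S_Mh V (hpt u d') -> (d <= d')%N)
  (min_ex Hk).
by move=> _ H; apply: H.
Qed.

Lemma main_D (R : realType) (K : fieldType) n p (V : 'I_p -> 'rV[R]_n)
  (G : galg K n -> Prop) e (h : galg K (n + 1)) :
  in_ideal (S_Mh V) (homog_ideal_gens V G) h -> in_ideal (S_M V) G (Dh (comp e h)).
Proof.
move=> [rs [Hrs Hh]].
apply: (ideal_eq (h' := Dh (comp e (flatten [seq gmul q.1 q.2 | q <- rs])))).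
  by move=> w; rewrite !coef_Dcomp Hh.
elim: rs Hrs {Hh} => [|q rs IH] Hrs /=; first exact: ideal_nil.
rewrite Dh_comp_cat; apply: ideal_cat; last first.
  by apply: IH => q' q'rs; apply: Hrs; rewrite in_cons q'rs orbT.
have [Hq1 [g' [Hg' ->]]] := Hrs q (mem_head _ _).
apply: (ideal_eq (h' := gmul (Dh (comp (e - (affdeg_poly V g')%:Z) q.1)) g')).
  by move=> w; rewrite coef_Dcomp homog_lem.
apply: ideal_mul => //; first by move=> x y; apply: in_sgrp_add.
by move=> w; rewrite coef_Dcomp => /Hq1 /SMh_lsub; rewrite lsub_hptz.
Qed.

Unset Implicit Arguments.
Set Strict Implicit.

Theorem mainTheorem11 (R : realType) (K : fieldType) (n p : nat)
  (V : 'I_p -> 'rV[R]_n) (fs : seq (galg K n)) :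
  [pchar K] =i pred0 ->
  in_conv V 0 ->
  pointed (S_M V) ->
  pointed (S_Mh V) ->
  regular_seq (S_M V) fs ->
  forall i, (i < size fs)%N ->
    nzd_mod (S_Mh V) (homog_ideal_gens V (fun g => g \in take i fs))
      (homog V (nth [::] fs i)).
Proof.
move=> _ H0 _ _ [Hfs [Hreg _]] i Hi.
have Hnzd := Hreg i Hi.
move=> g Hg HFg.
pose ds := undup [seq tc q.2 | q <- g].
apply: (ideal_eq (h' := flatten [seq comp d g | d <- ds])).
  move=> u; rewrite coef_flatten big_map.
  under eq_bigr => d _ do rewrite coef_comp.
  have [Hin|Hn] := boolP (tc u \in ds).
    rewrite (bigD1_seq (tc u)) ?undup_uniq //= eqxx big1 ?addr0 // => d.
    by move=> /negbTE; rewrite eq_sym => ->.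
  rewrite big1_seq; last first.
    move=> d /andP[_ dds]; case: eqP => // E.
    by rewrite E dds in Hn.
  rewrite /coef big1_seq // => q /andP[/eqP E qg]; case/negP: Hn.
  by rewrite mem_undup -E (map_f (fun q => tc q.2) qg).
apply: ideal_flatten => d _.
case: d => [k|k]; last first.
  apply: (ideal_eq (h' := [::])); last exact: ideal_nil.
  move=> u; rewrite coef_comp coef_nil; case: ifP => // /eqP E.
  apply/eqP; apply: contraT => Hc; have := SMh_tc (Hg _ Hc); by rewrite E.
have Hh_alg : Defs.in_alg (S_M V) (Dh (comp k g)).
  by move=> w; rewrite coef_Dcomp => /Hg /SMh_lsub; rewrite lsub_hptz.
have HfH : in_ideal (S_M V) (fun g => g \in take i fs)
    (gmul (nth [::] fs i) (Dh (comp k g))).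
  apply: (ideal_eq (h' := Dh (comp (k%:Z + (affdeg_poly V (nth [::] fs i))%:Z)
             (gmul (homog V (nth [::] fs i)) g)))); last exact: main_D.
  by move=> w; rewrite gmulC coef_Dcomp [in RHS]gmulC homog_lem addrK.
have Hh := Hnzd _ Hh_alg HfH.
have Hdeg : (affdeg_poly V (Dh (comp k g)) <= k)%N.
  apply/bigmax_leqP_seq => u Hu _; apply: affdeg_le; apply: Hg.
  by move: Hu; rewrite mem_supp coef_Dcomp.
exists [:: ([:: (1, hpt 0 (k - affdeg_poly V (Dh (comp k g))))],
           homog V (Dh (comp k g)))]; split.
  move=> q; rewrite inE => /eqP -> /=; split; last by exists (Dh (comp k g)).
  move=> u; rewrite coef_cons coef_nil addr0; case: ifP => [/eqP <- _|]; last by rewrite eqxx.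
  exact: SMh_hpt0.
move=> v /=; rewrite cats0 coef_gmul_l big_cons big_nil addr0 mul1r /=.
rewrite coef_homog coef_comp.
have -> : v - hpt 0 (k - affdeg_poly V (Dh (comp k g))) =
    hptz (lsubmx v) (tc v - (k - affdeg_poly V (Dh (comp k g)))%N%:Z).
  by rewrite {1}(hptz_split v) hpt_hptz hptzB subr0.
rewrite tc_hptz lsub_hptz coef_Dcomp.
have -> : (tc v - (k - affdeg_poly V (Dh (comp k g)))%N%:Z ==
           (affdeg_poly V (Dh (comp k g)))%:Z) = (tc v == k).
  by rewrite subr_eq -PoszD subnKC.
by case: ifP => // /eqP E; rewrite -E -hptz_split.
Qed.
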